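(* Every palindromic composition $\beta$ is $\mathcal{L}$-unique; that is, if $\alpha$ is a composition with $\mathcal{L}(\alpha,\mathbf{x})=\mathcal{L}(\beta,\mathbf{x})$, then $\alpha=\beta$.
   Context: A composition is a finite nonempty sequence $\beta=\beta_1\cdots\beta_k$ of positive integers; it is a palindrome if $\beta_k\cdots\beta_1=\beta$. The type $\lambda(\alpha)$ of a composition is the partition obtained by sorting its parts in weakly decreasing order; for a partition $\lambda=\lambda_1\cdots\lambda_l$, $\mathbf{x}_\lambda=x_{\lambda_1}\cdots x_{\lambda_l}$ in commuting indeterminates $x_1,x_2,\ldots$. A composition $\alpha$ is a coarsening of $\beta$, $\alpha\succeq\beta$, if $\alpha$ arises from $\beta$ by summing blocks of consecutive parts. The $\mathcal{L}$-polynomial is $\mathcal{L}(\beta,\mathbf{x})=\sum_{\alpha\succeq\beta}\mathbf{x}_{\lambda(\alpha)}$. A composition $\beta$ is $\mathcal{L}$-unique if the set of compositions with the same $\mathcal{L}$-polynomial as $\beta$ equals $\{\beta,\text{reverse of }\beta\}$. *)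

(* Defs.v *)
From mathcomp Require Import all_boot.
Set Implicit Arguments. Unset Strict Implicit. Unset Printing Implicit Defensive.

Definition composition (b : seq nat) : bool := (b != [::]) && all (fun p => 0 < p) b.

Definition palindrome (b : seq nat) : Prop := rev b = b.

(* All coarsenings of b (compositions obtained by summing blocks of
   consecutive parts); one entry per choice of merged gaps, i.e. the list
   enumerates the set {a | a coarsening of b} without repetition. *)
Fixpoint coarsenings (b : seq nat) : seq (seq nat) :=
  match b with
  | [::] => [:: [::]]
  | a :: s =>
      flatten [seq (if c is c0 :: c' then [:: a :: c; (a + c0) :: c']
                    else [:: [:: a]]) | c <- coarsenings s]
  end.

Definition ptype (a : seq nat) : seq nat := sort geq a.

(* The L-polynomial L(b, x) = sum_{a coarsening of b} x_{lambda(a)},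
   represented by its coefficient function on monomials x_lam, where the
   monomial x_lam (lam a partition, i.e. a weakly decreasing seq of positive
   integers) is identified with lam; distinct partitions give distinct
   monomials, so this is exactly the polynomial. *)
Definition Lpoly (b : seq nat) : seq nat -> nat :=
  fun lam => count (fun a => ptype a == lam) (coarsenings b).

(* Main.v *)
Require Import Defs.
From mathcomp Require Import all_boot zify.

Lemma sort2 (u v : nat) : sort geq [:: u; v] = if v <= u then [:: u; v] else [:: v; u].
Proof. by rewrite /sort /=; case: ifP. Qed.

Lemma eq_size (a b : seq nat) : size a != size b -> (a == b) = false.
Proof. by move=> H; apply/negbTE; apply: contra H => /eqP->. Qed.

Lemma ptype_size (a b : seq nat) : size a != size b -> (ptype a == b) = false.
Proof. by move=> H; apply: eq_size; rewrite /ptype size_sort. Qed.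

Lemma ptype2 (a : seq nat) p q : q <= p ->
  (ptype a == [:: p; q]) = (a == [:: p; q]) || (a == [:: q; p]).
Proof.
move=> qp.
case: a => [|u [|v [|w l]]].
- by [].
- by rewrite ptype_size // !eq_size.
- rewrite /ptype sort2; case: ifP => vu; rewrite !eqseq_cons !andbT;
  apply/idP/idP.
  + by case/andP=> /eqP Hu /eqP Hv; subst; rewrite !eqxx.
  + case/orP=> /andP[/eqP Hu /eqP Hv]; subst; rewrite ?eqxx //.
    have E : p = q by lia.
    by rewrite E eqxx.
  + by case/andP=> /eqP Hu /eqP Hv; subst; rewrite !eqxx orbT.
  + case/orP=> /andP[/eqP Hu /eqP Hv]; subst; rewrite ?eqxx //.
    have E : p = q by lia.
    by rewrite E eqxx.
- by rewrite ptype_size // !eq_size.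
Qed.

Lemma ptype1 (a : seq nat) n : (ptype a == [:: n]) = (a == [:: n]).
Proof.
case: a => [|u [|v l]] //.
by rewrite ptype_size // !eq_size.
Qed.

Definition gf (a : nat) (c : seq nat) : seq (seq nat) :=
  if c is c0 :: c' then [:: a :: c; (a + c0) :: c'] else [:: [:: a]].

Lemma coarsE a s : coarsenings (a :: s) = flatten [seq gf a c | c <- coarsenings s].
Proof. by []. Qed.

Lemma cnt_nil a l : count (pred1 [::]) (flatten [seq gf a c | c <- l]) = 0.
Proof. by elim: l => [|[|c0 c'] l IH] //=. Qed.

Lemma cnt_one a l y : count (pred1 [:: y]) (flatten [seq gf a c | c <- l]) =
  (y == a) * count (pred1 [::]) l + (a <= y) * count (pred1 [:: y - a]) l.
Proof.
elim: l => [|[|c0 c'] l IH] /=; first by rewrite !muln0.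
- rewrite IH !eqseq_cons !andbT.
  case: (eqVneq y a) => [->|ya] /=; first by rewrite leqnn subnn /=; lia.
  by case: (a <= y); lia.
- rewrite IH !eqseq_cons andbF /=.
  have H : (a + c0 == y) = (a <= y) && (c0 == y - a).
    apply/idP/idP => [/eqP <-|/andP[H1 /eqP ->]].
      by rewrite leq_addr addKn eqxx.
    by rewrite subnKC.
  rewrite H.
  by case: (y == a); case: (a <= y); case: (c0 == y - a); case: (c' == [::]); lia.
Qed.

Lemma cnt_two a l x y : count (pred1 [:: x; y]) (flatten [seq gf a c | c <- l]) =
  (x == a) * count (pred1 [:: y]) l + (a <= x) * count (pred1 [:: x - a; y]) l.
Proof.
elim: l => [|[|c0 c'] l IH] /=; first by rewrite !muln0.
- by rewrite IH eq_size.
- rewrite IH.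
  have H : (a + c0 == x) = (a <= x) && (c0 == x - a).
    apply/idP/idP => [/eqP <-|/andP[H1 /eqP ->]].
      by rewrite leq_addr addKn eqxx.
    by rewrite subnKC.
  rewrite [[:: a, c0 & c'] == _]eqseq_cons [(a + c0 :: c') == _]eqseq_cons.
  rewrite [(c0 :: c') == [:: x - a; y]]eqseq_cons H [a == x]eq_sym.
  by case: (x == a); case: (a <= x); case: (c0 == x - a); case: (c' == [:: y]);
    case: (c0 :: c' == [:: y]); rewrite /= ?mul1n ?mul0n ?addn0 ?add0n; lia.
Qed.

Lemma cntG s : count (pred1 [::]) (coarsenings s) = (s == [::]) /\
  forall y, count (pred1 [:: y]) (coarsenings s) = (s != [::]) && (y == sumn s).
Proof.
elim: s => [|a s [IH0 IH1]]; first by split.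
split; first by rewrite coarsE cnt_nil.
move=> y; rewrite coarsE cnt_one IH0 IH1 /=.
case: s IH0 IH1 => [|c s] _ _ /=.
- by rewrite muln1 muln0 !addn0.
- have H : (y == a + (c + sumn s)) = (a <= y) && (y - a == c + sumn s).
    apply/idP/idP => [/eqP ->|/andP[H1 /eqP <-]].
      by rewrite leq_addr addKn eqxx.
    by rewrite subnKC.
  by rewrite muln0 add0n H; case: (a <= y); rewrite ?mul1n ?mul0n.
Qed.

Definition K (b : seq nat) x y : bool :=
  has (fun i => (x == sumn (take i b)) && (y == sumn (drop i b))) (iota 1 (size b).-1).

Lemma Krec a s x y : K (a :: s) x y =
  ((s != [::]) && (x == a) && (y == sumn s)) || ((a <= x) && K s (x - a) y).
Proof.
rewrite /K /=; case: s => [|c s] //=.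
  by rewrite andbF.
rewrite -[2]/(1 + 1) iotaDl has_map addn0.
congr (_ || _).
have E : forall i, take (1 + i) [:: a, c & s] = a :: take i (c :: s) by [].
have E' : forall i, drop (1 + i) [:: a, c & s] = drop i (c :: s) by [].
case: (leqP a x) => ax /=.
- apply: eq_has => i; rewrite /preim /= add0n.
  by apply/idP/idP => /andP[/eqP H1 /eqP H2]; apply/andP; split; apply/eqP; lia.
- apply/negbTE/hasPn => i _; rewrite /preim /= add0n.
  by apply/negP => /andP[/eqP ? _]; lia.
Qed.

Lemma sumn_take_pos s i : all (fun p => 0 < p) s -> s != [::] -> 0 < i -> 0 < sumn (take i s).
Proof. by case: s => [|c s] //= /andP[c0 _] _; case: i => //= i _; rewrite addn_gt0 c0. Qed.

Lemma Kzero s y : all (fun p => 0 < p) s -> K s 0 y = false.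
Proof.
case: s => [|c s] // ps; apply/negbTE/hasPn => i; rewrite mem_iota => /andP[i1 _].
by rewrite negb_and eq_sym -lt0n sumn_take_pos.
Qed.

Lemma F_K b x y : all (fun p => 0 < p) b ->
  count (pred1 [:: x; y]) (coarsenings b) = K b x y.
Proof.
elim: b x y => [|a s IH] x y; first by [].
move=> /andP[a0 ps].
rewrite coarsE cnt_two (proj2 (cntG s)) IH // Krec.
case: (eqVneq x a) => [->|xa] /=.
- by rewrite leqnn subnn (Kzero _ _ ps) andbT /= addn0 orbF mul1n.
- by rewrite mul0n add0n andbF /=; case: (_ <= _); case: (K _ _ _).
Qed.

Lemma K_rev b x y : K (rev b) x y -> K b y x.
Proof.
rewrite /K size_rev => /hasP[i]; rewrite mem_iota => /andP[i1 i2] /andP[/eqP Hx /eqP Hy].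
apply/hasP; exists (size b - i).
  rewrite mem_iota; apply/andP; split; lia.
rewrite take_rev drop_rev sumn_rev in Hx Hy.
rewrite Hx Hy.
by rewrite sumn_rev !eqxx.
Qed.

Lemma K_pal b x y : rev b = b -> K b x y = K b y x.
Proof.
move=> hb; apply/idP/idP => H; apply: K_rev; by rewrite hb.
Qed.

Lemma Kinj (al be : seq nat) :
  all (fun p => 0 < p) al -> all (fun p => 0 < p) be ->
  sumn al = sumn be -> (forall x y, K al x y = K be x y) -> al = be.
Proof.
elim: al be => [|a s IH] [|b t] //=.
- by move=> _ /andP[b0 _] E; lia.
- by move=> /andP[a0 _] _ E; lia.
move=> /andP[a0 ps] /andP[b0 pt] E HK.
have Ha := HK a (sumn s); have Hb := HK b (sumn t).
rewrite !Krec !eqxx /= in Ha Hb.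
case: (eqVneq s [::]) => [es|ns]; case: (eqVneq t [::]) => [et|nt].
- by subst; rewrite /= !addn0 in E; rewrite E.
- by subst; move: Hb; rewrite /K /= nt andbF.
- by subst; move: Ha; rewrite /K /= ns andbF.
- have Ha' : K (b :: t) a (sumn s) by rewrite -HK Krec ns !eqxx.
  have Hb' : K (a :: s) b (sumn t) by rewrite HK Krec nt !eqxx.
  rewrite Krec in Ha'; rewrite Krec in Hb'.
  have ab : a = b.
    have h1 : b <= a.
      by case/orP: Ha' => [/andP[/andP[_ /eqP ->] _] //|/andP[-> _] //].
    have h2 : a <= b.
      by case/orP: Hb' => [/andP[/andP[_ /eqP ->] _] //|/andP[-> _] //].
    lia.
  subst b; congr (_ :: _); apply: IH => //; first by lia.
  move=> x y.
  case: (posnP x) => [->|x0]; first by rewrite !Kzero.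
  have := HK (a + x) y; rewrite !Krec addKn leq_addr /=.
  have -> : (a + x == a) = false by apply/negbTE; lia.
  by rewrite !andbF.
Qed.

Lemma Lpoly1 b n : Lpoly b [:: n] = (b != [::]) && (n == sumn b).
Proof.
rewrite /Lpoly (eq_count (fun a => ptype1 a n)).
exact: (proj2 (cntG b)).
Qed.

Lemma Lpoly2 b x y : x <= y -> all (fun p => 0 < p) b ->
  Lpoly b [:: y; x] = if x == y then K b x y : nat else K b x y + K b y x.
Proof.
move=> xy pb; rewrite /Lpoly (eq_count (fun a => @ptype2 a y x xy)).
case: (eqVneq x y) => [<-|ne].
  by rewrite (eq_count (fun a => orbb (a == [:: x; x]))) F_K.
have := count_predUI (pred1 [:: y; x]) (pred1 [:: x; y]) (coarsenings b).
rewrite (@eq_count _ (predI _ _) pred0); last first.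
  move=> a /=; apply/negbTE; apply/negP => /andP[/eqP -> /eqP]. 
  by case=> E; rewrite E eqxx in ne.
rewrite count_pred0 addn0 !F_K // addnC => <-.
by apply: eq_count => a.
Qed.

Theorem proposition3p6 (alpha beta : seq nat) :
  composition alpha -> composition beta -> palindrome beta ->
  Lpoly alpha =1 Lpoly beta -> alpha = beta.
Proof.
case/andP=> na pa; case/andP=> nb pb pal HL.
have E : sumn alpha = sumn beta.
  have := HL [:: sumn beta]; rewrite !Lpoly1 na nb eqxx /=.
  by case: (eqVneq (sumn beta) (sumn alpha)).
apply: Kinj => // x y.
wlog xy : x y / x <= y.
  move=> W; case: (leqP x y) => [|/ltnW h]; first exact: W.
  (* use symmetry of beta *)
  case: (eqVneq x y) => [->|ne]; first exact: W.
  have := W y x h.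
  have := HL [:: x; y]; rewrite !Lpoly2 //.
  rewrite eq_sym (negbTE ne) (K_pal beta x y pal).
  by case: (K alpha x y); case: (K alpha y x); case: (K beta y x); lia.
have := HL [:: y; x]; rewrite !Lpoly2 //.
case: (eqVneq x y) => [_|ne].
  by case: (K alpha x y); case: (K beta x y).
rewrite (K_pal beta y x pal).
by case: (K alpha x y); case: (K alpha y x); case: (K beta x y).
Qed.
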